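(* Let $\alpha>1$ and let $m_0\in\mathrm{BUC}([0,\infty))$ be non-decreasing with $m_0(0)=0$, $M=\sup m_0>0$, and suppose there is $c_0\in(0,\infty)$ with $m_0(\rho)<M$ for $\rho<c_0$ and $m_0(\rho)=M$ for $\rho\ge c_0$. If $$\limsup_{\rho\to c_0^-}\frac{M-m_0(\rho)}{(c_0-\rho)^{\frac\alpha{\alpha-1}}}=+\infty,$$ then there is no waiting time: for every $t>0$, the viscosity solution $m$ of the mass problem with datum $m_0$ satisfies $S(t):=\inf\{\rho: m(t,\rho)=M\}>c_0$.
   Context: $\mathrm{BUC}$ denotes bounded uniformly continuous functions. The mass problem is $m_t+(m_\rho)_+^\alpha m=0$ ($t,\rho>0$), $m(t,0)=0$, $m(0,\cdot)=m_0$, in the viscosity sense: with Fréchet super/subdifferentials $D^\pm$, a continuous $m$ is a subsolution if $p_1+(p_2)_+^\alpha m\le0$ for $(p_1,p_2)\in D^+m(t,\rho)$, $m(0,\cdot)\le m_0$, $m(t,0)\le0$; a supersolution with reversed inequalities and $D^-$; a solution if both. For $m_0\in\mathrm{BUC}$ non-decreasing with $m_0(0)=0$ a unique $\mathrm{BUC}$ viscosity solution exists and a comparison principle holds. *)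

(* Defs.v *)
From Stdlib Require Import Reals.
From Coquelicot Require Import Coquelicot.
Open Scope R_scope.

Definition pos_pow (p alpha : R) : R :=
  if Rlt_dec 0 p then Rpower p alpha else 0.

Definition norm2 (a b : R) : R := sqrt (a * a + b * b).

Definition inQ (t rho : R) : Prop := 0 <= t /\ 0 <= rho.

Definition BUC1 (f : R -> R) : Prop :=
  (exists B, forall x, 0 <= x -> Rabs (f x) <= B) /\
  (forall eps, 0 < eps -> exists delta, 0 < delta /\
     forall x y, 0 <= x -> 0 <= y -> Rabs (x - y) < delta ->
       Rabs (f x - f y) < eps).

Definition BUC2 (m : R -> R -> R) : Prop :=
  (exists B, forall t rho, inQ t rho -> Rabs (m t rho) <= B) /\
  (forall eps, 0 < eps -> exists delta, 0 < delta /\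
     forall t rho s r, inQ t rho -> inQ s r ->
       norm2 (s - t) (r - rho) < delta ->
       Rabs (m s r - m t rho) < eps).

Definition continuous_on_Q (m : R -> R -> R) : Prop :=
  forall t rho, inQ t rho ->
  forall eps, 0 < eps -> exists delta, 0 < delta /\
     forall s r, inQ s r -> norm2 (s - t) (r - rho) < delta ->
       Rabs (m s r - m t rho) < eps.

Definition superdiff (m : R -> R -> R) (t rho p1 p2 : R) : Prop :=
  forall eps, 0 < eps -> exists delta, 0 < delta /\
    forall s r, inQ s r -> norm2 (s - t) (r - rho) < delta ->
      m s r - m t rho - p1 * (s - t) - p2 * (r - rho)
        <= eps * norm2 (s - t) (r - rho).

Definition subdiff (m : R -> R -> R) (t rho p1 p2 : R) : Prop :=
  forall eps, 0 < eps -> exists delta, 0 < delta /\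
    forall s r, inQ s r -> norm2 (s - t) (r - rho) < delta ->
      m s r - m t rho - p1 * (s - t) - p2 * (r - rho)
        >= - eps * norm2 (s - t) (r - rho).

Definition visc_subsolution (alpha : R) (m0 : R -> R) (m : R -> R -> R) : Prop :=
  continuous_on_Q m /\
  (forall t rho p1 p2, 0 < t -> 0 < rho -> superdiff m t rho p1 p2 ->
     p1 + pos_pow p2 alpha * m t rho <= 0) /\
  (forall rho, 0 <= rho -> m 0 rho <= m0 rho) /\
  (forall t, 0 <= t -> m t 0 <= 0).

Definition visc_supersolution (alpha : R) (m0 : R -> R) (m : R -> R -> R) : Prop :=
  continuous_on_Q m /\
  (forall t rho p1 p2, 0 < t -> 0 < rho -> subdiff m t rho p1 p2 ->
     p1 + pos_pow p2 alpha * m t rho >= 0) /\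
  (forall rho, 0 <= rho -> m 0 rho >= m0 rho) /\
  (forall t, 0 <= t -> m t 0 >= 0).

Definition visc_solution (alpha : R) (m0 : R -> R) (m : R -> R -> R) : Prop :=
  visc_subsolution alpha m0 m /\ visc_supersolution alpha m0 m.

Definition limsup_left_infty (f : R -> R) (c : R) : Prop :=
  forall K delta, 0 < delta -> exists x, c - delta < x < c /\ K < f x.

(* S(t) = inf { rho >= 0 : m(t,rho) = M }  (in Rbar; +oo if empty) *)
Definition front (m : R -> R -> R) (M t : R) : Rbar :=
  Glb_Rbar (fun rho => 0 <= rho /\ m t rho = M).

(* Main.v *)
Require Import Defs.
From Stdlib Require Import Reals.
From Coquelicot Require Import Coquelicot.
From Stdlib Require Import Lra Psatz ClassicalEpsilon.
Open Scope R_scope.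

Lemma norm2_ge_l a b : Rabs a <= norm2 a b.
Proof.
  unfold norm2. rewrite <- sqrt_Rsqr_abs. apply sqrt_le_1_alt. unfold Rsqr. nra.
Qed.
Lemma norm2_ge_r a b : Rabs b <= norm2 a b.
Proof.
  unfold norm2. rewrite <- sqrt_Rsqr_abs. apply sqrt_le_1_alt. unfold Rsqr. nra.
Qed.
Lemma norm2_le a b : norm2 a b <= Rabs a + Rabs b.
Proof.
  unfold norm2.
  assert (Ha: a*a = Rabs a * Rabs a) by (rewrite <- Rabs_mult; rewrite Rabs_pos_eq; nra).
  assert (Hb: b*b = Rabs b * Rabs b) by (rewrite <- Rabs_mult; rewrite Rabs_pos_eq; nra).
  pose proof (Rabs_pos a); pose proof (Rabs_pos b).
  rewrite <- (sqrt_Rsqr (Rabs a + Rabs b)) by lra.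
  apply sqrt_le_1_alt. unfold Rsqr. nra.
Qed.
Lemma norm2_pos a b : 0 <= norm2 a b.
Proof. unfold norm2. apply sqrt_pos. Qed.

Lemma cont_pt_of (g : R -> R) x :
  (forall eps, 0 < eps -> exists d, 0 < d /\ forall y, Rabs (y - x) < d -> Rabs (g y - g x) < eps) ->
  continuity_pt g x.
Proof.
  intros H. unfold continuity_pt, continue_in, limit1_in, limit_in.
  intros eps He. destruct (H eps He) as [d [Hd H']]. exists d; split; auto.
  intros y [_ Hy]. simpl in *. unfold R_dist in *. apply H'; auto.
Qed.

Definition clamp (lo hi x : R) := Rmax lo (Rmin hi x).
Lemma clamp_in lo hi x : lo <= hi -> lo <= clamp lo hi x <= hi.
Proof. intros. unfold clamp, Rmax, Rmin. repeat destruct Rle_dec; lra. Qed.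
Lemma clamp_id lo hi x : lo <= x <= hi -> clamp lo hi x = x.
Proof. intros. unfold clamp, Rmax, Rmin. repeat destruct Rle_dec; lra. Qed.
Lemma clamp_lip lo hi x y : lo <= hi -> Rabs (clamp lo hi x - clamp lo hi y) <= Rabs (x - y).
Proof. intros. unfold clamp, Rmax, Rmin. repeat destruct Rle_dec; split_Rabs; lra. Qed.

Lemma maxrect (f : R -> R -> R) (t0 t1 a b : R) : t0 <= t1 -> a <= b ->
 (forall eps, 0<eps -> exists d, 0<d /\ forall t t' r r', t0<=t<=t1 -> t0<=t'<=t1 -> a<=r<=b -> a<=r'<=b ->
     Rabs (t-t') < d -> Rabs (r-r') < d -> Rabs (f t r - f t' r') < eps) ->
 exists ts rs, t0<=ts<=t1 /\ a<=rs<=b /\ forall t r, t0<=t<=t1 -> a<=r<=b -> f t r <= f ts rs.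
Proof.
  intros Ht Hab U.
  assert (Hex : forall t, exists r, a <= r <= b /\ forall c, a <= c <= b -> f (clamp t0 t1 t) c <= f (clamp t0 t1 t) r).
  { intros t.
    destruct (continuity_ab_maj (fun c => f (clamp t0 t1 t) (clamp a b c)) a b Hab) as [Mx [H1 H2]].
    - intros c _. apply cont_pt_of. intros eps He. destruct (U eps He) as [d [Hd Hu]].
      exists d; split; auto. intros y Hy. apply Hu; try apply clamp_in; auto.
      + rewrite Rminus_eq_0, Rabs_R0; auto.
      + eapply Rle_lt_trans. apply clamp_lip; auto. auto.
    - exists Mx. split; auto. intros c Hc. specialize (H1 c Hc).
      rewrite (clamp_id a b c) in H1 by auto. rewrite (clamp_id a b Mx) in H1 by auto. auto. }
  set (r := fun t => proj1_sig (constructive_indefinite_description _ (Hex t))).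
  assert (Hr : forall t, a <= r t <= b /\ forall c, a <= c <= b -> f (clamp t0 t1 t) c <= f (clamp t0 t1 t) (r t)).
  { intros t. unfold r. destruct (constructive_indefinite_description _ (Hex t)); simpl; auto. }
  set (G := fun t => f (clamp t0 t1 t) (r t)).
  destruct (continuity_ab_maj G t0 t1 Ht) as [ts [H1 H2]].
  - intros c _. apply cont_pt_of. intros eps He.
    destruct (U (eps/2) ltac:(lra)) as [d [Hd Hu]].
    exists d; split; auto. intros y Hy.
    destruct (Hr y) as [Hy1 Hy2]. destruct (Hr c) as [Hc1 Hc2].
    assert (Hcl : Rabs (clamp t0 t1 y - clamp t0 t1 c) < d) by (eapply Rle_lt_trans; [apply clamp_lip|]; auto).
    assert (A1 : Rabs (f (clamp t0 t1 y) (r c) - f (clamp t0 t1 c) (r c)) < eps/2).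
    { apply Hu; try apply clamp_in; auto. rewrite Rminus_eq_0, Rabs_R0; auto. }
    assert (A2 : Rabs (f (clamp t0 t1 y) (r y) - f (clamp t0 t1 c) (r y)) < eps/2).
    { apply Hu; try apply clamp_in; auto. rewrite Rminus_eq_0, Rabs_R0; auto. }
    specialize (Hy2 (r c) Hc1). specialize (Hc2 (r y) Hy1).
    unfold G. split_Rabs; lra.
  - exists ts, (r ts). split; auto. split. apply Hr.
    intros t rr Htt Hrr. specialize (H1 t Htt). unfold G in H1.
    rewrite (clamp_id t0 t1 t) in H1 by auto. rewrite (clamp_id t0 t1 ts) in H1 by auto.
    destruct (Hr t) as [_ Hc]. specialize (Hc rr Hrr). rewrite (clamp_id t0 t1 t) in Hc by auto. lra.
Qed.

Ltac minle := first [ apply Rle_refl | eapply Rle_trans; [apply Rmin_l| minle] | eapply Rle_trans; [apply Rmin_r| minle] ].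

Lemma pen_bound th D u : 0 < D -> 0 <= th -> Rabs u <= D/2 ->
  th/(D-u) - th/D - th*u/(D*D) <= 2*th*(u*u)/(D*D*D).
Proof.
  intros HD Hth Hu.
  assert (Hu2 : u <= D/2) by (split_Rabs; lra).
  assert (E: th/(D-u) - th/D - th*u/(D*D) - 2*th*(u*u)/(D*D*D) = th*(u*u)*(2*u - D) * / ((D-u)*(D*D*D))) by (field; lra).
  assert (N : th*(u*u)*(2*u - D) <= 0).
  { assert (0 <= th*(u*u)) by (apply Rmult_le_pos; nra). nra. }
  assert (I : 0 < / ((D-u)*(D*D*D))) by (apply Rinv_0_lt_compat; repeat apply Rmult_lt_0_compat; lra).
  nra.
Qed.

Lemma le_div x y z : 0 < z -> x <= y / z -> x * z <= y.
Proof. intros Hz H. replace y with (y / z * z) by (field; lra). apply Rmult_le_compat_r; lra. Qed.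

Lemma g_lip th T T1 t t' : 0 <= th -> T1 < T -> t <= T1 -> t' <= T1 ->
  Rabs (th/(T-t) - th/(T-t')) <= th/((T-T1)*(T-T1)) * Rabs (t - t').
Proof.
  intros Hth HT Ht Ht'.
  replace (th/(T-t) - th/(T-t')) with ((t - t') * (th / ((T-t)*(T-t')))) by (field; lra).
  rewrite Rabs_mult, Rmult_comm. apply Rmult_le_compat_r; [apply Rabs_pos|].
  rewrite Rabs_pos_eq.
  2:{ apply Rmult_le_pos; auto. left; apply Rinv_0_lt_compat; nra. }
  unfold Rdiv. apply Rmult_le_compat_l; auto.
  apply Rinv_le_contravar. nra.
  apply Rmult_le_compat; lra.
Qed.

Lemma comp_lemma alpha (m w : R -> R -> R) T a b B C :
  0 < T -> 0 <= a -> a < b -> 0 <= C ->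
  (forall t r, inQ t r -> Rabs (m t r) <= B) ->
  (forall eps, 0 < eps -> exists delta, 0 < delta /\ forall t rho s r, inQ t rho -> inQ s r ->
       norm2 (s - t) (r - rho) < delta -> Rabs (m s r - m t rho) < eps) ->
  (forall t r p1 p2, 0 < t -> 0 < r -> superdiff m t r p1 p2 -> p1 + pos_pow p2 alpha * m t r <= 0) ->
  (forall t t' r r', 0<=t<=T -> 0<=t'<=T -> a<=r<=b -> a<=r'<=b ->
       Rabs (w t r - w t' r') <= C * (Rabs (t-t') + Rabs (r - r'))) ->
  (forall r, a<=r<=b -> m 0 r <= w 0 r) ->
  (forall t, 0<=t<=T -> m t a <= w t a /\ m t b <= w t b) ->
  (forall t r, 0<t<T -> a<r<b -> exists p1 p2, superdiff w t r p1 p2 /\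
       forall v, w t r < v -> 0 < p1 + pos_pow p2 alpha * v) ->
  forall t r, 0<=t<T -> a<=r<=b -> m t r <= w t r.
Proof.
  intros HT Ha Hab HC Hbd Huc Hsub Hlip Hini Hbdry Hstr t0 r0 Ht0 Hr0.
  destruct (Rle_or_lt (m t0 r0) (w t0 r0)) as [|Hd]; auto. exfalso.
  set (d := m t0 r0 - w t0 r0).
  assert (Hdp : 0 < d) by (unfold d; lra).
  set (th := d*(T-t0)/2).
  assert (Hth : 0 < th) by (unfold th; apply Rmult_lt_0_compat; [apply Rmult_lt_0_compat|]; lra).
  set (B' := B + Rabs (w 0 a) + C*(T + (b-a))).
  assert (HB' : forall t r, 0<=t<=T -> a<=r<=b -> m t r - w t r <= B').
  { intros t r Ht Hr. assert (inQ t r) by (split; lra).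
    specialize (Hbd t r H). specialize (Hlip t 0 r a Ht ltac:(lra) Hr ltac:(lra)).
    assert (Rabs (t - 0) + Rabs (r - a) <= T + (b - a)) by (split_Rabs; lra).
    assert (C * (Rabs (t - 0) + Rabs (r - a)) <= C*(T + (b-a))) by (apply Rmult_le_compat_l; lra).
    unfold B'. split_Rabs; lra. }
  set (q := th/(2*(Rabs B' + 1))).
  assert (Hq : 0 < q) by (unfold q; apply Rdiv_lt_0_compat; [lra| pose proof (Rabs_pos B'); lra]).
  set (T1 := Rmax ((t0+T)/2) (T - q)).
  assert (HT1a : t0 < T1) by (unfold T1; pose proof (Rmax_l ((t0+T)/2) (T - q)); lra).
  assert (HT1b : T1 < T) by (unfold T1; apply Rmax_lub_lt; lra).
  assert (HT1c : T - T1 <= q) by (unfold T1; pose proof (Rmax_r ((t0+T)/2) (T - q)); lra).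
  assert (HgT1 : th/(T-T1) >= 2*(Rabs B' + 1)).
  { assert (th/(T-T1) >= th/q).
    { apply Rle_ge. unfold Rdiv. apply Rmult_le_compat_l; [lra|]. apply Rinv_le_contravar; lra. }
    assert (th/q = 2*(Rabs B' + 1)) by (unfold q; field; pose proof (Rabs_pos B'); split; lra).
    lra. }
  set (f := fun t r => m t r - w t r - th/(T - t)).
  set (k := th/((T-T1)*(T-T1))).
  assert (Hk : 0 <= k) by (unfold k; left; apply Rdiv_lt_0_compat; nra).
  destruct (maxrect f 0 T1 a b ltac:(lra) ltac:(lra)) as [ts [rs [Hts [Hrs Hmax]]]].
  { intros eps He. destruct (Huc (eps/3) ltac:(lra)) as [dm [Hdm Hm]].
    set (dl := Rmin (Rmin (dm/2) (eps/(6*(C+1)))) (eps/(3*(k+1)))).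
    assert (Hdl : 0 < dl).
    { unfold dl. repeat apply Rmin_pos; try lra; apply Rdiv_lt_0_compat; lra. }
    assert (Hdl1 : dl <= dm/2) by (unfold dl; eapply Rle_trans; [apply Rmin_l|apply Rmin_l]).
    assert (Hdl2 : dl <= eps/(6*(C+1))) by (unfold dl; eapply Rle_trans; [apply Rmin_l|apply Rmin_r]).
    assert (Hdl3 : dl <= eps/(3*(k+1))) by (unfold dl; apply Rmin_r).
    apply le_div in Hdl2; [|lra]. apply le_div in Hdl3; [|lra].
    exists dl; split; auto.
    intros t t' r r' Ht Ht' Hr Hr' Htt Hrr.
    assert (N : norm2 (t - t') (r - r') < dm).
    { eapply Rle_lt_trans. apply norm2_le. lra. }
    specialize (Hm t' r' t r ltac:(split;lra) ltac:(split;lra) N).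
    specialize (Hlip t t' r r' ltac:(lra) ltac:(lra) Hr Hr').
    pose proof (g_lip th T T1 t t' ltac:(lra) HT1b ltac:(lra) ltac:(lra)) as Hg. fold k in Hg.
    assert (C * (Rabs (t - t') + Rabs (r - r')) < eps/3).
    { assert (C * (Rabs (t - t') + Rabs (r - r')) <= C * (2*dl)) by (apply Rmult_le_compat_l; lra).
      assert (C * dl * 6 + dl * 6 <= eps) by (ring_simplify; ring_simplify in Hdl2; lra).
      lra. }
    assert (k * Rabs (t - t') <= k * dl) by (apply Rmult_le_compat_l; lra).
    assert (k * dl * 3 + dl * 3 <= eps) by (ring_simplify; ring_simplify in Hdl3; lra).
    unfold f.
    replace (m t r - w t r - th / (T - t) - (m t' r' - w t' r' - th / (T - t')))
      with ((m t r - m t' r') - (w t r - w t' r') - (th / (T - t) - th / (T - t'))) by ring.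
    eapply Rle_lt_trans. apply Rabs_triang. rewrite Rabs_Ropp.
    eapply Rle_lt_trans. apply Rplus_le_compat_r. apply Rabs_triang. rewrite Rabs_Ropp.
    lra. }
  assert (Hf0 : f t0 r0 = d/2) by (unfold f, th; fold d; field; lra).
  assert (Hfs : f ts rs >= d/2).
  { rewrite <- Hf0. apply Rle_ge. apply Hmax; lra. }
  assert (Hgpos : forall t, t < T -> 0 < th/(T - t)) by (intros; apply Rdiv_lt_0_compat; lra).
  assert (Hts0 : 0 < ts).
  { destruct (Req_dec ts 0) as [E|E]; [|lra]. subst ts.
    unfold f in Hfs; cbv beta in Hfs. specialize (Hini rs Hrs). specialize (Hgpos 0 HT). lra. }
  assert (Hts1 : ts < T1).
  { destruct (Req_dec ts T1) as [E|E]; [|lra]. rewrite E in Hfs.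
    unfold f in Hfs; cbv beta in Hfs. assert (HT1r : 0 <= T1 <= T) by (split; lra). specialize (HB' T1 rs HT1r Hrs). pose proof (Rle_abs B'). pose proof (Rabs_pos B'). lra. }
  assert (Hrsa : a < rs).
  { destruct (Req_dec rs a) as [E|E]; [|lra]. rewrite E in Hfs.
    unfold f in Hfs; cbv beta in Hfs. destruct (Hbdry ts ltac:(lra)). specialize (Hgpos ts ltac:(lra)). lra. }
  assert (Hrsb : rs < b).
  { destruct (Req_dec rs b) as [E|E]; [|lra]. rewrite E in Hfs.
    unfold f in Hfs; cbv beta in Hfs. destruct (Hbdry ts ltac:(lra)). specialize (Hgpos ts ltac:(lra)). lra. }
  destruct (Hstr ts rs ltac:(lra) ltac:(lra)) as [p1 [p2 [Hsw Hst]]].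
  set (D := T - ts).
  assert (HD : 0 < D) by (unfold D; lra).
  assert (Hsup : superdiff m ts rs (p1 + th/(D*D)) p2).
  { intros eps He. destruct (Hsw (eps/2) ltac:(lra)) as [d1 [Hd1 Hw]].
    set (dl := Rmin (Rmin (Rmin d1 ts) (Rmin (T1 - ts) (rs - a)))
                    (Rmin (Rmin (b - rs) (D/2)) (eps*(D*D*D)/(4*(th+1))))).
    assert (HD3 : 0 < D*D*D) by (repeat apply Rmult_lt_0_compat; lra).
    assert (Hdl : 0 < dl).
    { unfold dl. repeat apply Rmin_pos; try lra. apply Rdiv_lt_0_compat; [apply Rmult_lt_0_compat|]; lra. }
    assert (L1 : dl <= d1 /\ dl <= ts /\ dl <= T1 - ts /\ dl <= rs - a /\ dl <= b - rs /\ dl <= D/2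
                 /\ dl <= eps*(D*D*D)/(4*(th+1))).
    { unfold dl. repeat split; minle. }
    destruct L1 as [L1 [L2 [L3 [L4 [L5 [L6 L7]]]]]].
    exists dl; split; auto.
    intros s r HQ Hn.
    pose proof (norm2_ge_l (s - ts) (r - rs)) as N1.
    pose proof (norm2_ge_r (s - ts) (r - rs)) as N2.
    set (n := norm2 (s - ts) (r - rs)) in *.
    assert (Hs : 0 <= s <= T1) by (split_Rabs; lra).
    assert (Hr : a <= r <= b) by (split_Rabs; lra).
    specialize (Hmax s r Hs Hr). unfold f in Hmax; cbv beta in Hmax.
    assert (Hnd : n < d1) by lra. specialize (Hw s r HQ Hnd). fold n in Hw.
    assert (HuD : Rabs (s - ts) <= D/2) by lra. pose proof (pen_bound th D (s - ts) HD ltac:(lra) HuD) as Hp.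
    replace (D - (s - ts)) with (T - s) in Hp by (unfold D; ring).
    assert (HUU : (s - ts) * (s - ts) = Rabs (s - ts) * Rabs (s - ts)).
    { rewrite <- Rabs_mult. rewrite Rabs_pos_eq; [reflexivity|]. apply Rle_0_sqr. }
    set (U := Rabs (s - ts)) in *.
    assert (HU0 : 0 <= U) by apply Rabs_pos.
    assert (HUth : U * (th + 1) <= eps * (D*D*D) / 4).
    { apply le_div; [lra|]. replace (eps * (D * D * D) / 4 / (th + 1)) with (eps * (D * D * D) / (4 * (th + 1))) by (field; lra). lra. }
    assert (Hpen : 2*th*((s - ts)*(s - ts))/(D*D*D) <= eps/2 * n).
    { rewrite HUU. apply (Rmult_le_reg_r (D*D*D)); auto.
      replace (2 * th * (U * U) / (D * D * D) * (D * D * D)) with (2 * th * (U*U)) by (field; lra).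
      assert (th * U <= eps * (D*D*D)/4) by nra.
      assert (2 * th * (U*U) <= 2 * U * (eps * (D*D*D)/4)) by nra.
      assert (2 * U * (eps * (D*D*D)/4) <= 2 * n * (eps * (D*D*D)/4)).
      { apply Rmult_le_compat_r. left; apply Rdiv_lt_0_compat; [apply Rmult_lt_0_compat|]; lra. lra. }
      replace (eps / 2 * n * (D * D * D)) with (2 * n * (eps * (D*D*D)/4)) by field.
      lra. }
    assert (E1 : (p1 + th / (D * D)) * (s - ts) = p1 * (s - ts) + th * (s - ts) / (D*D)) by (field; lra).
    rewrite E1. unfold D in *. lra. }
  specialize (Hsub ts rs _ p2 Hts0 ltac:(lra) Hsup).
  assert (Hwm : w ts rs < m ts rs).
  { unfold f in Hfs; cbv beta in Hfs. specialize (Hgpos ts ltac:(lra)). lra. }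
  specialize (Hst _ Hwm).
  assert (0 < th/(D*D)) by (apply Rdiv_lt_0_compat; nra).
  lra.
Qed.

Lemma Rpower_pos' x y : 0 < Rpower x y.
Proof. unfold Rpower. apply exp_pos. Qed.
Lemma pos_pow_nonneg p a : 0 <= pos_pow p a.
Proof. unfold pos_pow. destruct Rlt_dec. left; apply Rpower_pos'. lra. Qed.
Lemma pos_pow_pos p a : 0 < p -> pos_pow p a = Rpower p a.
Proof. intros. unfold pos_pow. destruct Rlt_dec; lra. Qed.

Lemma pen_sd th D : 0 <= th -> 0 < D -> forall eps, 0 < eps -> exists dl, 0 < dl /\
  forall u n, Rabs u <= n -> n < dl -> th/(D-u) - th/D - th*u/(D*D) <= eps*n.
Proof.
  intros Hth HD eps He.
  assert (HD3 : 0 < D*D*D) by (repeat apply Rmult_lt_0_compat; lra).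
  exists (Rmin (D/2) (eps*(D*D*D)/(2*(th+1)))). split.
  { apply Rmin_pos. lra. apply Rdiv_lt_0_compat; [apply Rmult_lt_0_compat|]; lra. }
  intros u n Hu Hn.
  pose proof (Rmin_l (D/2) (eps*(D*D*D)/(2*(th+1)))).
  pose proof (Rmin_r (D/2) (eps*(D*D*D)/(2*(th+1)))) as L7.
  pose proof (pen_bound th D u HD Hth ltac:(lra)) as Hp.
  assert (HUU : u * u = Rabs u * Rabs u).
  { rewrite <- Rabs_mult. rewrite Rabs_pos_eq; [reflexivity|]. apply Rle_0_sqr. }
  set (U := Rabs u) in *.
  assert (HU0 : 0 <= U) by apply Rabs_pos.
  assert (HUth : U * (th + 1) <= eps * (D*D*D) / 2).
  { apply le_div; [lra|]. replace (eps * (D * D * D) / 2 / (th + 1)) with (eps * (D * D * D) / (2 * (th + 1))) by (field; lra). lra. }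
  assert (2*th*(u*u)/(D*D*D) <= eps * n).
  { rewrite HUU. apply (Rmult_le_reg_r (D*D*D)); auto.
    replace (2 * th * (U * U) / (D * D * D) * (D * D * D)) with (2 * th * (U*U)) by (field; lra).
    assert (th * U <= eps * (D*D*D)/2) by nra.
    assert (2 * th * (U*U) <= 2 * U * (eps * (D*D*D)/2)) by nra.
    assert (2 * U * (eps * (D*D*D)/2) <= 2 * n * (eps * (D*D*D)/2)).
    { apply Rmult_le_compat_r. left; apply Rdiv_lt_0_compat; [apply Rmult_lt_0_compat|]; lra. lra. }
    replace (eps * n * (D * D * D)) with (2 * n * (eps * (D*D*D)/2)) by field.
    lra. }
  lra.
Qed.

Lemma key alpha M t0 delta h :
 1 < alpha -> 0 < M -> 0 < t0 -> 0 < delta -> 0 < h ->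
 Rpower (Rpower 4 alpha / (M*t0)) (/(alpha-1)) < delta / Rpower h (alpha/(alpha-1)) ->
 delta/(M*t0) < Rpower (delta/(4*h)) alpha.
Proof.
  intros Ha HM Ht Hd Hh HK.
  set (K := Rpower (Rpower 4 alpha / (M*t0)) (/(alpha-1))) in *.
  set (P := Rpower 4 alpha).
  assert (HP : 0 < P) by apply Rpower_pos'.
  assert (HK0 : 0 < K) by apply Rpower_pos'.
  pose proof (Rpower_pos' h (alpha/(alpha-1))) as Hhb.
  assert (H1 : K * Rpower h (alpha/(alpha-1)) < delta).
  { apply (Rmult_lt_compat_r (Rpower h (alpha / (alpha - 1)))) in HK; auto.
    replace (delta / Rpower h (alpha / (alpha - 1)) * Rpower h (alpha / (alpha - 1))) with delta in HK by (field; lra). auto. }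
  assert (H2 : Rpower (K * Rpower h (alpha/(alpha-1))) (alpha - 1) < Rpower delta (alpha - 1)).
  { apply Rlt_Rpower_l. lra. split; auto. apply Rmult_lt_0_compat; auto. }
  rewrite <- Rpower_mult_distr in H2 by auto.
  assert (E1 : Rpower K (alpha - 1) = P/(M*t0)).
  { unfold K. rewrite Rpower_mult. replace (/ (alpha - 1) * (alpha - 1)) with 1 by (field; lra).
    apply Rpower_1. apply Rdiv_lt_0_compat; auto. apply Rmult_lt_0_compat; auto. }
  assert (E2 : Rpower (Rpower h (alpha/(alpha-1))) (alpha - 1) = Rpower h alpha).
  { rewrite Rpower_mult. f_equal. field. lra. }
  rewrite E1, E2 in H2.
  set (A := Rpower delta (alpha - 1)) in *.
  set (Hh' := Rpower h alpha) in *.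
  assert (HHh : 0 < Hh') by apply Rpower_pos'.
  assert (F2 : Rpower (delta/(4*h)) alpha * (P * Hh') = delta * A).
  { unfold P, Hh', A. rewrite Rpower_mult_distr by lra.
    rewrite Rpower_mult_distr; [| apply Rdiv_lt_0_compat; lra | apply Rmult_lt_0_compat; lra].
    replace (delta / (4 * h) * (4 * h)) with delta by (field; lra).
    replace alpha with (1 + (alpha - 1)) at 1 by ring.
    rewrite Rpower_plus, Rpower_1 by auto. reflexivity. }
  apply (Rmult_lt_reg_r (P * Hh')). apply Rmult_lt_0_compat; auto.
  rewrite F2.
  replace (delta / (M * t0) * (P * Hh')) with (delta * (P / (M * t0) * Hh')) by (field; split; lra).
  apply Rmult_lt_compat_l; auto.
Qed.

Theorem mainTheorem9 (alpha : R) (m0 : R -> R) (M c0 : R) :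
  1 < alpha ->
  BUC1 m0 ->
  (forall x y, 0 <= x -> x <= y -> m0 x <= m0 y) ->
  m0 0 = 0 ->
  is_lub_Rbar (fun y => exists rho, 0 <= rho /\ y = m0 rho) M ->
  0 < M ->
  0 < c0 ->
  (forall rho, 0 <= rho -> rho < c0 -> m0 rho < M) ->
  (forall rho, c0 <= rho -> m0 rho = M) ->
  limsup_left_infty
    (fun rho => (M - m0 rho) / Rpower (c0 - rho) (alpha / (alpha - 1))) c0 ->
  forall m : R -> R -> R,
    BUC2 m -> visc_solution alpha m0 m ->
    forall t, 0 < t -> Rbar_lt (Finite c0) (front m M t).
Proof.
  intros Ha [_ Huc0] Hmono H00 Hlub HM Hc0 Hlt Heq Hlim m [[B HB] Hucm] [Hsubsol _] t0 Ht0.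
  destruct Hsubsol as [_ [Hsub [Hini Hbd0]]].
  assert (HB0 : 0 <= B) by (specialize (HB 0 0 ltac:(split; lra)); pose proof (Rabs_pos (m 0 0)); lra).
  assert (Hm0M : forall r, 0 <= r -> m0 r <= M).
  { intros r Hr. destruct Hlub as [Hub _]. specialize (Hub (m0 r) (ex_intro _ r (conj Hr eq_refl))).
    simpl in Hub. auto. }
  destruct (Huc0 (M/2) ltac:(lra)) as [du [Hdu Hu]].
  destruct (Hlim (Rpower (Rpower 4 alpha / (M*t0)) (/(alpha-1))) (Rmin du (c0/2)) ltac:(apply Rmin_pos; lra))
    as [x [[Hx1 Hx2] HK]].
  pose proof (Rmin_l du (c0/2)). pose proof (Rmin_r du (c0/2)).
  set (h := c0 - x) in *.
  assert (Hh : 0 < h) by (unfold h; lra).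
  assert (Hhx : h < x) by (unfold h; lra).
  assert (Hmx : M/2 < m0 x).
  { specialize (Hu x c0 ltac:(lra) ltac:(lra) ltac:(split_Rabs; lra)). rewrite (Heq c0) in Hu by lra.
    split_Rabs; lra. }
  set (dl := M - m0 x).
  assert (Hdl : 0 < dl) by (unfold dl; specialize (Hlt x ltac:(lra) Hx2); lra).
  assert (Hdl2 : dl < M/2) by (unfold dl; lra).
  assert (Hm0x : forall r, 0 <= r <= x -> m0 r <= M - dl) by (intros r Hr; unfold dl; replace (M - (M - m0 x)) with (m0 x) by ring; apply Hmono; lra).
  pose proof (key alpha M t0 dl h Ha HM Ht0 Hdl Hh HK) as Hkey.
  set (eps := dl/(12*t0)).
  set (kap := h/4).
  set (a' := x - kap).
  set (th := dl*kap/16).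
  set (eta := th/(B + dl)).
  set (b := x - eta).
  set (L := dl/(4*h)).
  set (lam := dl/(2*t0)).
  set (b' := c0 + h/2 + (B+dl)/L).
  assert (Heps : 0 < eps) by (unfold eps; apply Rdiv_lt_0_compat; lra).
  assert (Hkap : 0 < kap) by (unfold kap; lra).
  assert (Hth : 0 < th) by (unfold th; apply Rdiv_lt_0_compat; [apply Rmult_lt_0_compat|]; lra).
  assert (Heta : 0 < eta) by (unfold eta; apply Rdiv_lt_0_compat; lra).
  assert (Heta2 : eta <= kap/16).
  { unfold eta, th. apply (Rmult_le_reg_r (B + dl)); [lra|].
    replace (dl * kap / 16 / (B + dl) * (B + dl)) with (dl * kap / 16) by (field; lra). nra. }
  assert (Hbx : kap/2 < b < x) by (unfold b; unfold kap in *; lra).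
  assert (Ha'b : 0 < a' <= b) by (unfold a', b; unfold kap in *; lra).
  assert (HL : 0 < L) by (unfold L; apply Rdiv_lt_0_compat; lra).
  assert (Hlam : 0 < lam) by (unfold lam; apply Rdiv_lt_0_compat; lra).
  assert (HLkap : L * kap = dl/16) by (unfold L, kap; field; lra).
  assert (HLh : L * h = dl/4) by (unfold L; field; lra).
  assert (Hlamt : lam * t0 = dl/2) by (unfold lam; field; lra).
  assert (Hepst : eps * t0 = dl/12) by (unfold eps; field; lra).
  assert (Hthk : th / kap = dl/16) by (unfold th; field; lra).
  assert (Hthe : th / eta = B + dl) by (unfold eta; field; lra).
  assert (HLb : L * ((B+dl)/L) = B + dl) by (field; lra).
  set (wL := fun t r => M - dl + eps * t + th / (x - r)).
  assert (Hleft : forall t r, 0 <= t < 2*t0 -> 0 <= r <= b -> m t r <= wL t r).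
  { apply (comp_lemma alpha m wL (2*t0) 0 b B (eps + th/(eta*eta))); try lra; auto.
    - left; apply Rplus_lt_0_compat; auto. apply Rdiv_lt_0_compat; nra.
    - intros t t' r r' Ht Ht' Hr Hr'. unfold wL.
      pose proof (g_lip th x b r r' ltac:(lra) ltac:(unfold b; lra) ltac:(lra) ltac:(lra)) as Hg.
      replace (x - b) with eta in Hg by (unfold b; ring).
      replace (M - dl + eps * t + th / (x - r) - (M - dl + eps * t' + th / (x - r')))
        with (eps * (t - t') + (th / (x - r) - th / (x - r'))) by ring.
      eapply Rle_trans. apply Rabs_triang. rewrite Rabs_mult, (Rabs_pos_eq eps) by lra.
      pose proof (Rabs_pos (t - t')). pose proof (Rabs_pos (r - r')).
      assert (0 <= th/(eta*eta)) by (left; apply Rdiv_lt_0_compat; nra).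
      nra.
    - intros r Hr. specialize (Hini r ltac:(lra)). specialize (Hm0x r ltac:(unfold b in *; lra)).
      unfold wL. assert (0 < th/(x-r)) by (apply Rdiv_lt_0_compat; unfold b in *; lra). lra.
    - intros t Ht. split.
      + specialize (Hbd0 t ltac:(lra)). unfold wL. assert (0 < th/(x-0)) by (apply Rdiv_lt_0_compat; lra).
        assert (0 <= eps * t) by (apply Rmult_le_pos; lra). lra.
      + specialize (HB t b ltac:(split; lra)). unfold wL.
        replace (x - b) with eta by (unfold b; ring). rewrite Hthe.
        assert (0 <= eps * t) by (apply Rmult_le_pos; lra). split_Rabs; lra.
    - intros t r Ht Hr. exists eps, (th / ((x - r)*(x - r))). split.
      + intros e He. destruct (pen_sd th (x - r) ltac:(lra) ltac:(unfold b in *; lra) e He) as [d1 [Hd1 Hp]].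
        exists d1; split; auto. intros s q HQ Hn.
        specialize (Hp (q - r) (norm2 (s - t) (q - r)) (norm2_ge_r _ _) Hn).
        unfold wL. replace (x - r - (q - r)) with (x - q) in Hp by ring.
        replace (M - dl + eps * s + th / (x - q) - (M - dl + eps * t + th / (x - r)) - eps * (s - t) -
                 th / ((x - r) * (x - r)) * (q - r))
          with (th / (x - q) - th / (x - r) - th * (q - r) / ((x - r) * (x - r))) by (unfold Rdiv; ring).
        auto.
      + intros v Hv. pose proof (pos_pow_nonneg (th / ((x - r) * (x - r))) alpha).
        assert (0 < wL t r).
        { unfold wL. assert (0 < th/(x-r)) by (apply Rdiv_lt_0_compat; unfold b in *; lra).
          assert (0 <= eps * t) by (apply Rmult_le_pos; lra). lra. }
        nra. }
  set (wM := fun t r => M + L * (r - x) - lam * t).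
  assert (Hmain : forall t r, 0 <= t < 3*t0/2 -> a' <= r <= b' -> m t r <= wM t r).
  { apply (comp_lemma alpha m wM (3*t0/2) a' b' B (lam + L)); try lra; auto.
    - unfold a', b'. assert (0 < (B+dl)/L) by (apply Rdiv_lt_0_compat; lra). unfold h in *; lra.
    - intros t t' r r' Ht Ht' Hr Hr'. unfold wM.
      replace (M + L * (r - x) - lam * t - (M + L * (r' - x) - lam * t'))
        with (L * (r - r') + (- lam) * (t - t')) by ring.
      eapply Rle_trans. apply Rabs_triang. rewrite !Rabs_mult, (Rabs_pos_eq L), Rabs_Ropp, (Rabs_pos_eq lam) by lra.
      pose proof (Rabs_pos (t - t')). pose proof (Rabs_pos (r - r')). nra.
    - intros r Hr. assert (0 <= r) by (unfold a' in *; lra). specialize (Hini r H1). unfold wM.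
      destruct (Rle_or_lt r x).
      + specialize (Hm0x r ltac:(lra)). unfold a' in Hr. nra.
      + specialize (Hm0M r H1). nra.
    - intros t Ht. split.
      + assert (Ha'b2 : 0 <= a' <= b) by lra.
        specialize (Hleft t a' ltac:(lra) Ha'b2). unfold wL, wM in *.
        replace (x - a') with kap in Hleft by (unfold a'; ring). rewrite Hthk in Hleft.
        replace (L * (a' - x)) with (- (L * kap)) by (unfold a'; ring). rewrite HLkap.
        assert (eps * t <= dl / 8).
        { assert (Hq1 : eps * t <= eps * (3*t0/2)) by (apply Rmult_le_compat_l; lra).
          replace (eps * (3*t0/2)) with (dl/8) in Hq1 by (unfold eps; field; lra). lra. }
        assert (lam * t <= 3 * dl / 4).
        { assert (Hq1 : lam * t <= lam * (3*t0/2)) by (apply Rmult_le_compat_l; lra).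
          replace (lam * (3*t0/2)) with (3*dl/4) in Hq1 by (unfold lam; field; lra). lra. }
        lra.
      + specialize (HB t b' ltac:(split; unfold b'; [lra|]; assert (0 < (B+dl)/L) by (apply Rdiv_lt_0_compat; lra); unfold h in *; lra)).
        unfold wM. replace (L * (b' - x)) with (L * h + L * (h/2) + L * ((B + dl)/L)) by (unfold b', h; ring).
        rewrite HLb, HLh. assert (lam * t <= 3 * dl / 4).
        { assert (Hq1 : lam * t <= lam * (3*t0/2)) by (apply Rmult_le_compat_l; lra).
          replace (lam * (3*t0/2)) with (3*dl/4) in Hq1 by (unfold lam; field; lra). lra. }
        assert (L * (h/2) = dl/8) by (unfold L; field; lra).
        split_Rabs; lra.
    - intros t r Ht Hr. exists (- lam), L. split.
      + intros e He. exists 1. split; [lra|]. intros s q _ _. unfold wM.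
        pose proof (norm2_pos (s - t) (q - r)).
        replace (M + L * (q - x) - lam * s - (M + L * (r - x) - lam * t) - - lam * (s - t) - L * (q - r)) with 0 by ring.
        nra.
      + intros v Hv. rewrite pos_pow_pos by auto.
        assert (v > M/2).
        { unfold wM in Hv. unfold a' in Hr.
          assert (lam * t <= 3 * dl / 4).
        { assert (Hq1 : lam * t <= lam * (3*t0/2)) by (apply Rmult_le_compat_l; lra).
          replace (lam * (3*t0/2)) with (3*dl/4) in Hq1 by (unfold lam; field; lra). lra. } nra. }
        assert (lam < Rpower L alpha * (M/2)).
        { unfold lam, L. apply (Rmult_lt_compat_r (M/2)) in Hkey; [|lra].
          replace (dl / (M * t0) * (M / 2)) with (dl / (2 * t0)) in Hkey by (field; lra). auto. }
        pose proof (Rpower_pos' L alpha). nra. }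
  set (c1 := c0 + h/2).
  assert (Hbelow : forall r, 0 <= r <= c1 -> m t0 r < M).
  { intros r Hr. destruct (Rle_or_lt r a') as [Hra|Hra].
    - assert (Hrb : 0 <= r <= b) by (unfold a', b in *; lra).
      specialize (Hleft t0 r ltac:(lra) Hrb). unfold wL in Hleft.
      assert (th / (x - r) <= th / kap).
      { unfold Rdiv. apply Rmult_le_compat_l; [lra|]. apply Rinv_le_contravar; auto. unfold a' in Hra; lra. }
      lra.
    - assert (Hrb : a' <= r <= b').
      { split; [lra|]. unfold b'. assert (0 < (B+dl)/L) by (apply Rdiv_lt_0_compat; lra). unfold c1 in Hr; lra. }
      specialize (Hmain t0 r ltac:(lra) Hrb). unfold wM in Hmain.
      assert (L * (r - x) <= L * (3*h/2)) by (apply Rmult_le_compat_l; [lra|]; unfold c1, h in *; lra).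
      assert (L * (3*h/2) = 3*dl/8) by (unfold L; field; lra).
      lra. }
  unfold front.
  destruct (Glb_Rbar_correct (fun rho => 0 <= rho /\ m t0 rho = M)) as [_ Hgr].
  assert (Hle : Rbar_le (Finite c1) (Glb_Rbar (fun rho => 0 <= rho /\ m t0 rho = M))).
  { apply Hgr. intros y [Hy1 Hy2]. simpl. destruct (Rle_or_lt y c1); [|lra].
    specialize (Hbelow y ltac:(lra)). lra. }
  destruct (Glb_Rbar (fun rho => 0 <= rho /\ m t0 rho = M)); simpl in *; auto.
  unfold c1 in Hle; lra.
Qed.
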